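(* Let $X$ be a gamble, $I\subset\mathbb{R}$ an interval containing the image set of $X$, $\phi:I\to\mathbb{R}$ convex and $\psi:I\to\mathbb{R}$ concave. Let $\underline{P}$ be a 2-coherent lower prevision (defined on a set of gambles containing all gambles involved below, e.g. on all gambles) and $\overline{P}$ its conjugate upper prevision, and assume $\underline{P}(X)$ and $\overline{P}(X)$ are interior points of $I$. Then $$\underline{P}(\psi(X))\le\min\{\psi(\underline{P}(X)),\psi(\overline{P}(X))\},\qquad \overline{P}(\phi(X))\ge\max\{\phi(\underline{P}(X)),\phi(\overline{P}(X))\}.$$ Moreover: if $\phi'_+(\underline{P}(X))\ge 0$ then $\underline{P}(\phi(X))\ge\phi(\underline{P}(X))$; if $\phi'_-(\overline{P}(X))\le 0$ then $\underline{P}(\phi(X))\ge\phi(\overline{P}(X))$; if $\psi'_-(\overline{P}(X))\ge 0$ then $\overline{P}(\psi(X))\le\psi(\overline{P}(X))$; if $\psi'_+(\underline{P}(X))\le 0$ then $\overline{P}(\psi(X))\le\psi(\underline{P}(X))$.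
   Context: $\Pi$ is a partition of the sure event into pairwise disjoint non-impossible events; a gamble is a bounded map $X:\Pi\to\mathbb{R}$, with image set $\{X(\omega):\omega\in\Pi\}$; $f(X)$ denotes the gamble $\omega\mapsto f(X(\omega))$. A lower prevision $\underline{P}:\mathcal{D}\to\mathbb{R}$ on a set of gambles $\mathcal{D}$ is 2-coherent iff for all $X_0,X_1\in\mathcal{D}$, all $s_1\ge 0$ and all $s_0\in\mathbb{R}$, $\sup\big[s_1(X_1-\underline{P}(X_1))-s_0(X_0-\underline{P}(X_0))\big]\ge 0$. The conjugate upper prevision is $\overline{P}(Y)=-\underline{P}(-Y)$. $f'_+,f'_-$ denote right and left derivatives. *)

(* Defs.v *)
From HB Require Import structures.
From mathcomp Require Import all_boot all_order all_algebra.
From mathcomp Require Import all_classical all_reals all_analysis.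
Set Implicit Arguments. Unset Strict Implicit. Unset Printing Implicit Defensive.
Import Order.TTheory GRing.Theory Num.Theory.
Import numFieldNormedType.Exports.
Local Open Scope classical_set_scope.
Local Open Scope ring_scope.

Section Defs.
Variables (R : realType) (Omega : Type).

Definition gamble (X : Omega -> R) : Prop := exists M : R, forall w, `|X w| <= M.

Definition two_coherent (D : set (Omega -> R)) (LP : (Omega -> R) -> R) : Prop :=
  forall X0 X1, D X0 -> D X1 -> forall s1 s0 : R, 0 <= s1 ->
    0 <= sup (range (fun w => s1 * (X1 w - LP X1) - s0 * (X0 w - LP X0))).

Definition upper (LP : (Omega -> R) -> R) (Y : Omega -> R) : R :=
  - LP (fun w => - Y w).
End Defs.

Section RDefs.
Variable R : realType.

Definition convex_on (I : interval R) (f : R -> R) : Prop :=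
  forall x y t : R, x \in I -> y \in I -> 0 <= t <= 1 ->
    f (t * x + (1 - t) * y) <= t * f x + (1 - t) * f y.

Definition concave_on (I : interval R) (f : R -> R) : Prop :=
  forall x y t : R, x \in I -> y \in I -> 0 <= t <= 1 ->
    t * f x + (1 - t) * f y <= f (t * x + (1 - t) * y).

Definition interior_pt (I : interval R) (x : R) : Prop :=
  exists e : R, 0 < e /\ forall y, `|y - x| < e -> y \in I.

Definition rderiv (f : R -> R) (a d : R) : Prop :=
  (fun h => (f (a + h) - f a) / h) @ 0^'+ --> d.
Definition lderiv (f : R -> R) (a d : R) : Prop :=
  (fun h => (f (a + h) - f a) / h) @ 0^'- --> d.
End RDefs.

(* Main.v *)
Require Import Defs.
From HB Require Import structures.
From mathcomp Require Import all_boot all_order all_algebra.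
From mathcomp Require Import all_classical all_reals all_analysis.
From mathcomp Require Import ring lra.
Import Order.TTheory GRing.Theory Num.Theory.
Import numFieldNormedType.Exports.
Local Open Scope classical_set_scope.
Local Open Scope ring_scope.
Set Implicit Arguments. Unset Strict Implicit.

Section Helpers.
Variable R : realType.
Implicit Types (S : R -> Prop) (f : R -> R).

Definition cvx S f := forall x y t : R, S x -> S y -> 0 <= t <= 1 ->
    f (t * x + (1 - t) * y) <= t * f x + (1 - t) * f y.
Definition intS S (a : R) := exists e : R, 0 < e /\ forall y, `|y - a| < e -> S y.

Lemma conv3 S f (x y z : R) : cvx S f -> S x -> S z -> x < y -> y < z ->
  (z - x) * f y <= (z - y) * f x + (y - x) * f z.
Proof.
move=> cf Sx Sz xy yz.
have zx : 0 < z - x by lra.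
pose t := (z - y) / (z - x).
have t01 : 0 <= t <= 1.
  apply/andP; split; rewrite /t.
    by apply: divr_ge0; lra.
  by rewrite ler_pdivrMr //; lra.
have := cf x z t Sx Sz t01.
have -> : t * x + (1 - t) * z = y.
  rewrite /t; field; lra.
move=> H.
have := ler_wpM2l (ltW zx) H.
have -> : (z - x) * (t * f x + (1 - t) * f z) = (z - y) * f x + (y - x) * f z.
  rewrite /t; field; lra.
done.
Qed.

Lemma subgrad S f a : cvx S f -> intS S a ->
  exists k, forall x, S x -> f a + k * (x - a) <= f x.
Proof.
move=> cf [e [e0 He]].
have Sa : S a by apply: He; rewrite subrr normr0.
have SaL : S (a - e / 2) by apply: He; rewrite (_ : a - e/2 - a = - (e/2)); [rewrite normrN ger0_norm; lra| ring].
have SaR : S (a + e / 2) by apply: He; rewrite (_ : a + e/2 - a = e/2); [rewrite ger0_norm; lra| ring].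
have slope : forall x y, S x -> S y -> x < a -> a < y ->
    (f a - f x) / (a - x) <= (f y - f a) / (y - a).
  move=> x y Sx Sy xa ay.
  have H := conv3 cf Sx Sy xa ay.
  rewrite ler_pdivrMr; last lra.
  rewrite mulrAC ler_pdivlMr; last lra.
  nra.
pose E := [set s | exists x, [/\ S x, x < a & s = (f a - f x) / (a - x)]].
have En : E !=set0 by exists ((f a - f (a - e/2)) / (a - (a - e/2))); exists (a - e/2); split => //; lra.
have Eub : forall y, S y -> a < y -> ubound E ((f y - f a) / (y - a)).
  by move=> y Sy ay _ [x [Sx xa ->]]; apply: slope.
have hs : has_sup E by split => //; exists ((f (a + e/2) - f a) / (a + e/2 - a)); apply: Eub => //; lra.
exists (sup E) => x Sx.
have [xa|ax|->] := ltgtP x a; last by rewrite subrr mulr0 addr0.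
- have := sup_upper_bound hs; move/(_ ((f a - f x) / (a - x))).
  have : E ((f a - f x) / (a - x)) by exists x; split.
  move=> Ex /(_ Ex); rewrite ler_pdivrMr; last lra.
  nra.
- have := ge_sup En (Eub x Sx ax); rewrite ler_pdivlMr; last lra.
  nra.
Qed.

Lemma rsub S f a d : cvx S f -> intS S a -> rderiv f a d ->
  forall x, S x -> f a + d * (x - a) <= f x.
Proof.
move=> cf [e [e0 He]] Hd x Sx.
have Sa : S a by apply: He; rewrite subrr normr0.
have [xa|ax|->] := ltgtP x a; last by rewrite subrr mulr0 addr0.
- pose sl := (f a - f x) / (a - x).
  suff : sl <= d.
    rewrite /sl ler_pdivrMr; last lra.
    nra.
  rewrite leNgt; apply/negP => dsl.
  have H1 : \forall h \near 0^'+, (f (a + h) - f a) / h < sl := @cvgr_lt _ _ _ (at_right_proper_filter 0) _ _ Hd _ dsl.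
  have H2 : \forall h \near 0^'+, sl <= (f (a + h) - f a) / h.
    near=> h.
    have h0 : 0 < h by near: h; exact: nbhs_right_gt.
    have he : h < e by near: h; exact: nbhs_right_lt.
    have Sah : S (a + h) by apply: He; rewrite (_ : a + h - a = h); [rewrite ger0_norm; lra| ring].
    have H := conv3 cf Sx Sah xa (_ : a < a + h).
    rewrite /sl ler_pdivlMr // mulrAC ler_pdivrMr; last lra.
    have := H ltac:(lra); nra.
  have [h [P1 P2]] := filter_ex (filterI H1 H2).
  by move: P1; rewrite ltNge P2.
- pose sl := (f x - f a) / (x - a).
  suff : d <= sl.
    rewrite /sl ler_pdivlMr; last lra.
    nra.
  rewrite leNgt; apply/negP => dsl.
  have H1 : \forall h \near 0^'+, sl < (f (a + h) - f a) / h := @cvgr_gt _ _ _ (at_right_proper_filter 0) _ _ Hd _ dsl.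
  have H2 : \forall h \near 0^'+, (f (a + h) - f a) / h <= sl.
    near=> h.
    have h0 : 0 < h by near: h; exact: nbhs_right_gt.
    have hx : h < x - a by near: h; apply: nbhs_right_lt; lra.
    have H := conv3 cf Sa Sx (_ : a < a + h) (_ : a + h < x).
    rewrite /sl ler_pdivrMr // mulrAC ler_pdivlMr; last lra.
    have := H ltac:(lra) ltac:(lra); nra.
  have [h [P1 P2]] := filter_ex (filterI H1 H2).
  by move: P1; rewrite ltNge P2.
Unshelve. all: by end_near.
Qed.


Lemma lsub S f b d : cvx S f -> intS S b -> lderiv f b d ->
  forall x, S x -> f b + d * (x - b) <= f x.
Proof.
move=> cf [e [e0 He]] Hd x Sx.
pose S' := fun y => S (- y).
pose f' := fun y => f (- y).
have cf' : cvx S' f'.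
  move=> u v t Su Sv t01; rewrite /f'.
  rewrite (_ : - (t * u + (1 - t) * v) = t * (- u) + (1 - t) * (- v)); last ring.
  exact: cf.
have iS' : intS S' (- b).
  exists e; split => // y hy; apply: He; rewrite /S'.
  by rewrite (_ : - y - b = - (y - - b)) ?normrN //; ring.
have rd : rderiv f' (- b) (- d).
  rewrite /lderiv in Hd; have H := (cvg_at_leftNP _ _ _).1 Hd; rewrite oppr0 in H; rewrite /rderiv.
  have E : (fun h => (f' (- b + h) - f' (- b)) / h) =
     (fun h => - (((fun h => (f (b + h) - f b) / h) \o -%R) h)).
    apply: funext => h /=; rewrite /f' opprK opprD opprK invrN mulrN opprK //.
  rewrite E; exact: cvgN.
have := rsub cf' iS' rd (x := - x); rewrite /S' /f' !opprK => /(_ Sx) H.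
lra.
Qed.

Lemma rderivN f a d : rderiv f a d -> rderiv (fun x => - f x) a (- d).
Proof.
rewrite /rderiv => H.
have E : (fun h => (- f (a + h) - - f a) / h) = (fun h => - ((f (a + h) - f a) / h)).
  by apply: funext => h; rewrite -mulNr opprB opprK addrC.
rewrite E; exact: cvgN.
Qed.

Lemma lderivN f a d : lderiv f a d -> lderiv (fun x => - f x) a (- d).
Proof.
rewrite /lderiv => H.
have E : (fun h => (- f (a + h) - - f a) / h) = (fun h => - ((f (a + h) - f a) / h)).
  by apply: funext => h; rewrite -mulNr opprB opprK addrC.
rewrite E; exact: cvgN.
Qed.

Section Coh.
Variables (Omega : Type) (w0 : Omega) (D : set (Omega -> R)) (L : (Omega -> R) -> R).
Hypothesis HC : two_coherent D L.

Lemma coh X0 X1 s1 s0 c : D X0 -> D X1 -> 0 <= s1 ->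
  (forall w, s1 * (X1 w - L X1) - s0 * (X0 w - L X0) <= c) -> 0 <= c.
Proof.
move=> D0 D1 s10 Hw.
apply: le_trans (HC D0 D1 s0 s10) _.
apply: ge_sup; first by exists (s1 * (X1 w0 - L X1) - s0 * (X0 w0 - L X0)); exists w0.
by move=> _ [w _ <-]; apply: Hw.
Qed.

Variables (X : Omega -> R) (S : R -> Prop).
Hypothesis SX : forall w, S (X w).
Hypothesis DX : D X.
Hypothesis DNX : D (fun w => - X w).

Lemma partA f : cvx S (fun x => - f x) -> intS S (L X) -> D (fun w => f (X w)) ->
  L (fun w => f (X w)) <= f (L X).
Proof.
move=> cf ia Df; have [k Hk] := subgrad cf ia.
rewrite -subr_ge0; apply: (@coh X (fun w => f (X w)) 1 (- k)) => // w.
have := Hk _ (SX w); lra.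
Qed.

Lemma partA' f : cvx S (fun x => - f x) -> intS S (- L (fun w => - X w)) ->
  D (fun w => f (X w)) ->
  L (fun w => f (X w)) <= f (- L (fun w => - X w)).
Proof.
move=> cf ia Df; have [k Hk] := subgrad cf ia.
rewrite -subr_ge0; apply: (@coh (fun w => - X w) (fun w => f (X w)) 1 k) => // w.
have := Hk _ (SX w); lra.
Qed.

Lemma partB f d : cvx S f -> intS S (L X) -> rderiv f (L X) d -> 0 <= d ->
  D (fun w => f (X w)) -> f (L X) <= L (fun w => f (X w)).
Proof.
move=> cf ia hd d0 Df; have Hk := rsub cf ia hd.
rewrite -subr_ge0; apply: (@coh (fun w => f (X w)) X d 1) => // w.
have := Hk _ (SX w); lra.
Qed.

Lemma partC f d : cvx S f -> intS S (- L (fun w => - X w)) ->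
  lderiv f (- L (fun w => - X w)) d -> d <= 0 ->
  D (fun w => f (X w)) -> f (- L (fun w => - X w)) <= L (fun w => f (X w)).
Proof.
move=> cf ia hd d0 Df; have Hk := lsub cf ia hd.
rewrite -subr_ge0; apply: (@coh (fun w => f (X w)) (fun w => - X w) (- d) 1) => //.
  lra.
move=> w; have := Hk _ (SX w); lra.
Qed.
End Coh.

End Helpers.
Theorem theorem4 (R : realType) (Omega : Type) (w0 : Omega)
  (D : set (Omega -> R)) (LP : (Omega -> R) -> R)
  (X : Omega -> R) (I : interval R) (phi psi : R -> R) :
  (forall Y, D Y -> gamble Y) ->
  two_coherent D LP ->
  gamble X ->
  D X -> D (fun w => - X w) ->
  D (fun w => phi (X w)) -> D (fun w => - phi (X w)) ->
  D (fun w => psi (X w)) -> D (fun w => - psi (X w)) ->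
  (forall w, X w \in I) ->
  convex_on I phi -> concave_on I psi ->
  interior_pt I (LP X) -> interior_pt I (upper LP X) ->
  (LP (fun w => psi (X w)) <= Num.min (psi (LP X)) (psi (upper LP X)) /\
      Num.max (phi (LP X)) (phi (upper LP X)) <= upper LP (fun w => phi (X w)) /\
      ((exists d, rderiv phi (LP X) d /\ 0 <= d) ->
        phi (LP X) <= LP (fun w => phi (X w))) /\
      ((exists d, lderiv phi (upper LP X) d /\ d <= 0) ->
        phi (upper LP X) <= LP (fun w => phi (X w))) /\
      ((exists d, lderiv psi (upper LP X) d /\ 0 <= d) ->
        upper LP (fun w => psi (X w)) <= psi (upper LP X)) /\
      ((exists d, rderiv psi (LP X) d /\ d <= 0) ->
        upper LP (fun w => psi (X w)) <= psi (LP X))).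
Proof.
move=> _ HC _ DX DNX Dphi DNphi Dpsi DNpsi IX cphi cpsi ia ib.
pose S := fun x : R => x \in I.
have cNpsi : cvx S (fun x => - psi x).
  move=> x y t Sx Sy t01; have := cpsi x y t Sx Sy t01; lra.
have cphi' : cvx S phi by [].
have cNNphi : cvx S (fun x => - - phi x).
  move=> x y t Sx Sy t01; rewrite !opprK; exact: cphi.
rewrite /upper in ib *.
split.
  rewrite le_min; apply/andP; split.
    exact: (partA w0 HC IX DX cNpsi ia Dpsi).
  exact: (partA' w0 HC IX DNX cNpsi ib Dpsi).
split.
  rewrite ge_max; apply/andP; split.
    have := partA w0 HC IX DX cNNphi ia DNphi; lra.
  have := partA' w0 HC IX DNX cNNphi ib DNphi; lra.
split.
  move=> [d [hd d0]]; exact: (partB w0 HC IX DX cphi' ia hd d0 Dphi).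
split.
  move=> [d [hd d0]]; exact: (partC w0 HC IX DNX cphi' ib hd d0 Dphi).
split.
  move=> [d [hd d0]].
  have := partC w0 HC IX DNX cNpsi ib (lderivN hd) (_ : - d <= 0) DNpsi.
  move=> /(_ ltac:(lra)); lra.
move=> [d [hd d0]].
have := partB w0 HC IX DX cNpsi ia (rderivN hd) (_ : 0 <= - d) DNpsi.
move=> /(_ ltac:(lra)); lra.
Qed.
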